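(* Let $G=(V,E)$ be an event graph and let $\mathcal C$ be any sink component of $\mathrm{dec}(G)$. Then for every vertex $v\in V$ there exists a subset $Y\subseteq\mathcal U_{|V}$ such that $(v,Y)$ is a node of $\mathcal C$.
   Context: An event graph is a finite, connected, undirected graph $G=(V,E)$, with $n=|V|$, in which every node $v$ carries a label that is either $\mathtt{i}x_v$ (insertion of $x_v$) or $\mathtt{d}x_v$ (deletion of $x_v$), where $x_v$ is an element of a finite universe $\mathcal U$. Write $\mathcal U_{|V}=\{x_v : v\in V\}$. It is assumed that for each $x\in\mathcal U_{|V}$ at least one node is labeled $\mathtt{i}x$ and at least one node is labeled $\mathtt{d}x$. The decorated graph $\mathrm{dec}(G)$ is the directed graph with vertex set $V\times 2^{\mathcal U_{|V}}$ in which $((u,X),(v,Y))$ is an edge if and only if $\{u,v\}\in E$ and $Y=X\cup\{x_v\}$ when $v$ is labeled $\mathtt{i}x_v$, respectively $Y=X\setminus\{x_v\}$ when $v$ is labeled $\mathtt{d}x_v$. A sink component of $\mathrm{dec}(G)$ is a strongly connected component of $\mathrm{dec}(G)$ from which no edge leads to a different strongly connected component. *)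

(* Defs.v *)
From mathcomp Require Import all_boot.
Set Implicit Arguments. Unset Strict Implicit. Unset Printing Implicit Defensive.

Section EventGraph.
Variables (V U : finType).
(* e : adjacency relation of the undirected graph (symmetric, irreflexive);
   ins v = true iff v is labeled "i x_v", false iff labeled "d x_v";
   lab v = x_v. *)
Variables (e : rel V) (ins : pred V) (lab : V -> U).

Definition UV : {set U} := [set lab v | v in V].

Definition dec_edge (p q : V * {set U}) : bool :=
  e p.1 q.1 &&
  (q.2 == (if ins q.1 then lab q.1 |: p.2 else p.2 :\ lab q.1)).

Definition dec_node (p : V * {set U}) : bool := p.2 \subset UV.

Definition dec_reach (p q : V * {set U}) : bool := connect dec_edge p q.

Definition is_scc (C : {set V * {set U}}) : Prop :=
  exists p, dec_node p /\
    C = [set q | dec_node q && dec_reach p q && dec_reach q p].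

Definition is_sink_component (C : {set V * {set U}}) : Prop :=
  is_scc C /\ (forall p q, p \in C -> dec_edge p q -> q \in C).

End EventGraph.

Definition event_graph (V U : finType) (e : rel V) (ins : pred V) (lab : V -> U)
  : Prop :=
  [/\ symmetric e, irreflexive e, (forall u v : V, connect e u v) &
      (forall x, x \in UV lab ->
         (exists v, ins v /\ lab v = x) /\ (exists v, ~~ ins v /\ lab v = x))].

(* Main.v *)
Require Import Defs.
From mathcomp Require Import all_boot.

Theorem mainTheorem1 (V U : finType) (e : rel V) (ins : pred V) (lab : V -> U)
  (hG : event_graph e ins lab) (C : {set V * {set U}})
  (hC : is_sink_component e ins lab C) :
  forall v : V, exists Y : {set U}, Y \subset UV lab /\ (v, Y) \in C.
Proof.
  case: hG => _ _ hconn _.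
  case: hC => [[p [hp defC]] hcl] v.
  have pC : p \in C by rewrite defC inE hp /dec_reach connect0.
  have key : forall s u X, (u, X) \in C -> path e u s ->
      exists Y, (last u s, Y) \in C.
    elim=> [|w s IH] u X uC /=; first by exists X.
    case/andP=> euw ps.
    set Y := (if ins w then lab w |: X else X :\ lab w).
    apply: (IH w Y) => //.
    apply: (hcl (u, X)) => //.
    by rewrite /dec_edge /= euw eqxx.
  move: pC; case: p defC hp => u X defC _ uC.
  case/connectP: (hconn u v) => s ps ->.
  case: (key s u X uC ps) => Y YC.
  exists Y; split => //.
  move: YC; rewrite defC inE => /andP [/andP [H _] _].
  exact H.
Qed.
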